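(* Let $G=N\rtimes G_0$ be a finite group, with $N$ normal in $G$, $G_0$ a subgroup, $N\cap G_0=\{1\}$, $G=NG_0$, and let $M$ be a $\mathbf{Z}[G]$-module with trivial $G$-action. If $\gcd\{|N|,|G_0|\}=1$, then for every $q\ge1$ the map $B_M^q(G)\to B_M^q(N)^{G_0}\times B_M^q(G_0)$ whose components are the restriction maps to $N$ and to $G_0$ is an isomorphism.
   Context: For a finite group $G$, a $\mathbf{Z}[G]$-module $M$ with trivial $G$-action and $q\ge1$, define $B_M^q(G)=\bigcap_A\operatorname{Ker}\{\operatorname{res}_G^A:H^q(G,M)\to H^q(A,M)\}$, where $A$ runs over all bicyclic subgroups of $G$ (a group is bicyclic if it is cyclic or a direct product of two cyclic groups). For $N\lhd G$, $G$ acts on $H^q(N,M)$ by conjugation: for a $q$-cocycle $\alpha$ and $g\in G$, $({}^g\alpha)(\tau_1,\dots,\tau_q)=\alpha(g^{-1}\tau_1g,\dots,g^{-1}\tau_qg)$; this action preserves $B_M^q(N)$, and $B_M^q(N)^{G_0}$ denotes the elements fixed by $G_0$. The restriction maps send $B_M^q(G)$ into $B_M^q(N)^{G_0}$ and into $B_M^q(G_0)$. *)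

(* Defs.v *)
From HB Require Import structures.
From mathcomp Require Import all_boot all_order all_algebra all_fingroup all_solvable.
From mathcomp Require Import gproduct cyclic.
Set Implicit Arguments. Unset Strict Implicit. Unset Printing Implicit Defensive.
Import GRing.Theory.
Local Open Scope ring_scope.

(* Inhomogeneous cochain complex of a finite group with coefficients in an
   abelian group M carrying the TRIVIAL action.  A q-cochain is a function
   seq gT -> M, of which only the values on sequences of length q with all
   entries in the relevant subgroup H matter. *)

Section Cohomology.
Variables (gT : finGroupType) (M : zmodType).

Definition cochain := seq gT -> M.

Definition alt_sign (n : nat) (x : M) : M := if odd n then - x else x.

Definition merge_at (i : nat) (s : seq gT) : seq gT :=
  take i s ++ ((nth 1%g s i * nth 1%g s i.+1)%g :: drop i.+2 s).

(* coboundary d : C^n -> C^(n+1), trivial action: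
   (d f)(g_1..g_(n+1)) = f(g_2..g_(n+1))
       + sum_(i=1..n) (-1)^i f(g_1..g_i g_(i+1)..g_(n+1))
       + (-1)^(n+1) f(g_1..g_n) *)
Definition cobound (n : nat) (f : cochain) : cochain := fun s =>
  f (behead s) + \sum_(i < n) alt_sign i.+1 (f (merge_at i s))
  + alt_sign n.+1 (f (take n s)).

Definition tuple_in (H : {set gT}) (n : nat) (s : seq gT) : Prop :=
  size s = n /\ all (fun x => x \in H) s.

Definition is_cocycle (H : {set gT}) (q : nat) (f : cochain) : Prop :=
  forall s, tuple_in H q.+1 s -> cobound q f s = 0.

(* q-coboundary of H, for q >= 1 *)
Definition is_coboundary (H : {set gT}) (q : nat) (f : cochain) : Prop :=
  exists g : cochain, forall s, tuple_in H q s -> f s = cobound q.-1 g s.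

Definition bicyclic (A : {group gT}) : Prop :=
  cyclic A \/ exists B C : {group gT}, [/\ cyclic B, cyclic C & (B \x C)%g = A].

(* the class of the q-cocycle f of H lies in B^q_M(H):
   its restriction to every bicyclic subgroup A of H is zero in H^q(A,M) *)
Definition in_B (H : {group gT}) (q : nat) (f : cochain) : Prop :=
  forall A : {group gT}, A \subset H -> bicyclic A -> is_coboundary A q f.

Definition conj_cochain (g : gT) (f : cochain) : cochain :=
  fun s => f (map (fun t => t ^ g)%g s).

(* the class of f in H^q(N,M) is fixed by every element of G0 *)
Definition fixed_by (N G0 : {group gT}) (q : nat) (f : cochain) : Prop :=
  forall g, g \in G0 -> is_coboundary N q (fun s => conj_cochain g f s - f s).

End Cohomology.

(* Main.v *)
Require Import Defs.
From HB Require Import structures.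
From mathcomp Require Import all_boot all_order all_algebra all_fingroup all_solvable.
From mathcomp Require Import gproduct cyclic.
Import GRing.Theory.
Local Open Scope ring_scope.
Set Implicit Arguments. Unset Strict Implicit. Unset Printing Implicit Defensive.


Lemma sub4 (M : zmodType) (x y p q : M) : (x - y) - (p - q) = (x - p) - (y - q).
Proof. by rewrite !opprB addrACA [RHS]addrACA [- y + _]addrC. Qed.

Section RemAt.
Variable T : Type.
Implicit Types (w : seq T).
Definition rem_at (i : nat) (w : seq T) := take i w ++ drop i.+1 w.

Lemma rem_at0 a w : rem_at 0 (a :: w) = w.
Proof. by rewrite /rem_at /= drop0. Qed.

Lemma rem_atS i a w : rem_at i.+1 (a :: w) = a :: rem_at i w.
Proof. by []. Qed.

Lemma size_rem_at i w : (i < size w)%N -> size (rem_at i w) = (size w).-1.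
Proof.
move=> lt; rewrite /rem_at size_cat size_take size_drop lt.
by case: (size w) lt => // n; rewrite ltnS => le; rewrite subSS addnC subnK.
Qed.



Lemma all_rem_at (P : pred T) i w : all P w -> all P (rem_at i w).
Proof.
move=> h; rewrite /rem_at all_cat; apply/andP; split.
  by rewrite -(cat_take_drop i w) all_cat in h; case/andP: h.
by rewrite -(cat_take_drop i.+1 w) all_cat in h; case/andP: h.
Qed.

End RemAt.

Lemma map_rem_at (T S : Type) (f : T -> S) i (w : seq T) : map f (rem_at i w) = rem_at i (map f w).
Proof. by rewrite /rem_at map_cat map_take map_drop. Qed.

Section Comb.
Variables (T : Type) (M : zmodType).
Implicit Types (F G : seq T -> M) (u v w x y : seq T).

Lemma alt_signS n (z : M) : alt_sign n.+1 z = - alt_sign n z.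
Proof. by rewrite /alt_sign /=; case: (odd n); rewrite ?opprK. Qed.

Lemma alt_signD n (z1 z2 : M) : alt_sign n (z1 + z2) = alt_sign n z1 + alt_sign n z2.
Proof. by rewrite /alt_sign; case: (odd n); rewrite ?opprD. Qed.

Lemma alt_signN n (z : M) : alt_sign n (- z) = - alt_sign n z.
Proof. by rewrite /alt_sign; case: (odd n). Qed.

Lemma alt_signB n (z1 z2 : M) : alt_sign n (z1 - z2) = alt_sign n z1 - alt_sign n z2.
Proof. by rewrite alt_signD alt_signN. Qed.

Lemma alt_sign0 n : alt_sign n (0 : M) = 0.
Proof. by rewrite /alt_sign; case: (odd n); rewrite ?oppr0. Qed.

Lemma alt_signMn n (z : M) k : alt_sign n (z *+ k) = alt_sign n z *+ k.
Proof. by rewrite /alt_sign; case: (odd n); rewrite ?mulNrn. Qed.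

Lemma alt_signMz n (z : M) k : alt_sign n (z *~ k) = alt_sign n z *~ k.
Proof. by rewrite /alt_sign; case: (odd n); rewrite ?mulNrz. Qed.

Lemma alt_sign_sum I (r : seq I) (P : pred I) (E : I -> M) n :
  alt_sign n (\sum_(i <- r | P i) E i) = \sum_(i <- r | P i) alt_sign n (E i).
Proof. by rewrite /alt_sign; case: (odd n); rewrite ?sumrN. Qed.

Lemma sum_alt_const k (z : M) :
  \sum_(i < k) alt_sign i z = if odd k then z else 0.
Proof.
elim: k => [|k IH]; first by rewrite big_ord0.
rewrite big_ord_recr /= IH /alt_sign; case: (odd k) => /=.
  by rewrite addrN. by rewrite add0r.
Qed.

Definition dl F w : M := \sum_(0 <= j < size w) alt_sign j (F (rem_at j w)).

Lemma dl_nil F : dl F [::] = 0.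
Proof. by rewrite /dl big_geq. Qed.

Lemma dl_cons F a w : dl F (a :: w) = F w - dl (fun y => F (a :: y)) w.
Proof.
rewrite /dl /= big_nat_recl // rem_at0 /=; congr (_ + _).
rewrite -sumrN; apply: eq_bigr => j _.
by rewrite rem_atS alt_signS.
Qed.

Lemma dlB F G w : dl (fun y => F y - G y) w = dl F w - dl G w.
Proof. by rewrite /dl -sumrB; apply: eq_bigr => j _; rewrite alt_signB. Qed.

Lemma dlD F G w : dl (fun y => F y + G y) w = dl F w + dl G w.
Proof. by rewrite /dl -big_split; apply: eq_bigr => j _; rewrite alt_signD. Qed.

Lemma dlMz F k w : dl (fun y => F y *~ k) w = dl F w *~ k.
Proof. by rewrite /dl mulrz_suml; apply: eq_bigr => j _; rewrite alt_signMz. Qed.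

Lemma dl_sum I (r : seq I) (P : pred I) (E : I -> seq T -> M) w :
  dl (fun y => \sum_(i <- r | P i) E i y) w = \sum_(i <- r | P i) dl (E i) w.
Proof.
rewrite /dl exchange_big; apply: eq_bigr => j _; exact: alt_sign_sum.
Qed.



Lemma dl_eq F G w : (forall j, (j < size w)%N -> F (rem_at j w) = G (rem_at j w)) ->
  dl F w = dl G w.
Proof.
move=> h; rewrite /dl big_nat_cond [RHS]big_nat_cond; apply: eq_bigr => j /andP[/andP[_ lj] _].
by rewrite h.
Qed.

Definition dl2 (H : seq T -> seq T -> M) u v : M :=
  \sum_(0 <= j < size u) alt_sign j (H (rem_at j u) (rem_at j v)).

Lemma dl2_cons H a b u v :
  dl2 H (a :: u) (b :: v) = H u v - dl2 (fun x y => H (a :: x) (b :: y)) u v.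
Proof.
rewrite /dl2 /= big_nat_recl // !rem_at0 /=; congr (_ + _).
rewrite -sumrN; apply: eq_bigr => j _.
by rewrite !rem_atS alt_signS.
Qed.

Lemma dl2B H1 H2 u v : dl2 (fun x y => H1 x y - H2 x y) u v = dl2 H1 u v - dl2 H2 u v.
Proof. by rewrite /dl2 -sumrB; apply: eq_bigr => j _; rewrite alt_signB. Qed.

Lemma dl2_r F u v : size u = size v -> dl2 (fun _ y => F y) u v = dl F v.
Proof. by move=> e; rewrite /dl2 /dl e. Qed.

Fixpoint Pz F u v : M :=
  match u, v with
  | a :: u', b :: v' => F (a :: b :: v') - Pz (fun y => F (a :: y)) u' v'
  | _, _ => 0
  end.

Lemma PzB F G u v : Pz (fun y => F y - G y) u v = Pz F u v - Pz G u v.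
Proof.
elim: u F G v => [|a u IH] F G [|b v] /=; rewrite ?subr0 //.
rewrite (IH (fun y => F (a :: y)) (fun y => G (a :: y))).
by rewrite sub4.
Qed.

Lemma Pz_ext F G u v : (forall y, F y = G y) -> Pz F u v = Pz G u v.
Proof.
elim: u F G v => [|a u IH] F G [|b v] //= h.
by rewrite h (IH _ (fun y => G (a :: y))).
Qed.

Lemma prism F u v : size u = size v -> dl2 (Pz F) u v + Pz (dl F) u v = F v - F u.
Proof.
elim: u F v => [|a u IH] F [|b v] //=; first by rewrite /dl2 big_geq // add0r subrr.
move=> [e]; rewrite dl2_cons.
have -> : dl2 (fun x y => Pz F (a :: x) (b :: y)) u v =
          dl (fun y => F (a :: b :: y)) v - dl2 (Pz (fun y => F (a :: y))) u v.
  by rewrite -(dl2_r _ e) -dl2B.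
rewrite (Pz_ext _ _ (F := fun y => dl F (a :: y)) (G := fun y => F y - dl (fun z => F (a :: z)) y)); last by move=> y; rewrite dl_cons.
rewrite PzB !dl_cons -/(dl _ _).
have := IH (fun y => F (a :: y)) v e => /= IHe.
set P1 := Pz F u v; set D := dl _ v; set E := dl2 _ u v; set Z := Pz (dl _) u v.
have -> : Z = F (a :: v) - F (a :: u) - E by rewrite -IHe addrC addKr.
set X := F (a :: v); set Y := F (a :: u); set W := F (b :: v).
(* (P1 - (D - E)) + (W - (X - D) - (P1 - (X - Y - E))) *)
rewrite !opprB !addrA subrK (addrAC _ (- D) W) subrK.
rewrite (addrAC _ (- Y) (- E)) (addrAC _ W (- E)) addrK.
by rewrite (addrAC _ (- Y) (- P1)) (addrAC P1 W (- P1)) subrr add0r.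
Qed.

End Comb.

Lemma dl_map (T S : Type) (M : zmodType) (f : S -> T) (F : seq T -> M) (z : seq S) :
  dl (fun y : seq S => F (map f y)) z = dl F (map f z).
Proof. by rewrite /dl size_map; apply: eq_bigr => j _; rewrite map_rem_at. Qed.


Section Comb2.
Variables (T : Type) (M : zmodType).
Implicit Types (F G : seq T -> M) (u v w x y : seq T).

Lemma Pz_map (f : T -> T) F G u v : (forall w, F (map f w) = G w) ->
  Pz F (map f u) (map f v) = Pz G u v.
Proof.
elim: u F G v => [|a u IH] F G [|b v] //= h.
rewrite -(h (a :: b :: v)) /=; congr (_ - _).
by apply: IH => w; rewrite -(h (a :: w)).
Qed.

Lemma Pz_zero (P : pred T) F u v :
  (forall w, size w = (size u).+1 -> all P w -> F w = 0) ->
  all P u -> all P v -> size u = size v -> Pz F u v = 0.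
Proof.
elim: u F v => [|a u IH] F [|b v] //= h /andP[Pa Pu] /andP[Pb Pv] [e].
rewrite h /= ?e ?Pa ?Pb ?Pv // (IH (fun y => F (a :: y))) ?subrr // => w sw Pw.
by apply: h; rewrite /= ?sw // Pa.
Qed.

Lemma dl2_map (f g : T -> T) (H : seq T -> seq T -> M) x :
  dl2 H (map f x) (map g x) = dl (fun y => H (map f y) (map g y)) x.
Proof. by rewrite /dl2 /dl size_map; apply: eq_bigr => j _; rewrite !map_rem_at. Qed.

End Comb2.

Section Grp.
Variables (gT : finGroupType) (M : zmodType).
Implicit Types (f F K : seq gT -> M) (s u v w x y : seq gT).

Fixpoint pp s : seq gT :=
  if s is a :: s' then 1%g :: map (mulg a) (pp s') else [:: 1%g].

Definition diffs s : seq gT :=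
  if s is x0 :: xs then pairmap (fun a b => a^-1 * b)%g x0 xs else [::].

Definition hom f x : M := f (diffs x).
Definition inh K s : M := K (pp s).

Lemma size_pp s : size (pp s) = (size s).+1.
Proof. by elim: s => //= a s IH; rewrite size_map IH. Qed.

Lemma size_diffs x : size (diffs x) = (size x).-1.
Proof. by case: x => //= a x; rewrite size_pairmap. Qed.

Lemma diffs_map g x : diffs (map (mulg g) x) = diffs x.
Proof.
case: x => //= a x; elim: x a => //= b x IH a.
by rewrite IH invMg -mulgA mulKg.
Qed.

Lemma diffs_pp s : diffs (pp s) = s.
Proof.
elim: s => //= a s IH.
have := diffs_map a (pp s); rewrite IH.
have [r ->] : exists r, pp s = 1%g :: r by case: s {IH} => [|b s]; eexists.
by rewrite /= => <-; rewrite invg1 mul1g mulg1.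
Qed.

Lemma pp_diffs a x : pp (diffs (a :: x)) = map (mulg a^-1) (a :: x).
Proof.
elim: x a => [|b x IH] a /=; first by rewrite mulVg.
rewrite mulVg; congr (_ :: _).
have := IH b; rewrite /= => ->.
rewrite /= mulVg mulg1 -map_comp; congr (_ :: _).
by apply: eq_map => z /=; rewrite !mulgA mulgK.
Qed.

Lemma merge_at0 a b s : merge_at 0 (a :: b :: s) = (a * b)%g :: s.
Proof. by rewrite /merge_at /= drop0. Qed.

Lemma merge_atS i a s : merge_at i.+1 (a :: s) = a :: merge_at i s.
Proof. by []. Qed.

Lemma rem_at_pp i s : (i.+1 < size s)%N -> rem_at i.+1 (pp s) = pp (merge_at i s).
Proof.
elim: s i => [|a s IH] [|i] //.
  case: s {IH} => [|b s] //= _; rewrite drop0 rem_atS rem_at0 -map_comp.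
  by congr (_ :: _); apply: eq_map => z /=; rewrite mulgA.
move=> lt; rewrite merge_atS /= rem_atS -map_rem_at IH //.
Qed.

Lemma take_pp k s : take k.+1 (pp s) = pp (take k s).
Proof.
elim: s k => [|a s IH] [|k] //=; first by rewrite take0.
by rewrite -map_take IH.
Qed.

Lemma rem_at_pp_last a s : rem_at (size s).+1 (pp (a :: s)) = pp (take (size s) (a :: s)).
Proof.
rewrite /rem_at drop_oversize ?cats0; last by rewrite size_pp.
by rewrite take_pp.
Qed.

Lemma all_pp (A : {group gT}) s : all (mem A) s -> all (mem A) (pp s).
Proof.
elim: s => [|a s IH] /=; first by rewrite group1.
case/andP=> Aa As; rewrite group1 /= all_map; apply/allP => z zin /=.
by rewrite groupM //; move/allP: (IH As) => /(_ z zin).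
Qed.

Lemma all_diffs (A : {group gT}) x : all (mem A) x -> all (mem A) (diffs x).
Proof.
case: x => //= a x; elim: x a => //= b x IH a /andP[Aa /andP[Ab Ax]].
by rewrite groupM ?groupV //= IH //= Ab.
Qed.

Lemma rem_at0_pp a s : rem_at 0 (pp (a :: s)) = map (mulg a) (pp s).
Proof. by rewrite /= rem_at0. Qed.

Lemma cobound_ext n f1 f2 s : (forall w, f1 w = f2 w) -> cobound n f1 s = cobound n f2 s.
Proof. by move=> h; rewrite /cobound !h; congr (_ + _ + _); apply: eq_bigr => i _; rewrite h. Qed.

Definition Ainv (A : {set gT}) K := forall g x, g \in A -> all (mem A) x -> K (map (mulg g) x) = K x.

Lemma chain (A : {group gT}) K q s : Ainv A K -> tuple_in A q.+1 s ->
  dl K (pp s) = cobound q (inh K) s.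
Proof.
move=> iK [ss As]; case: s ss As => [|a s'] // ss' /andP[Aa As'].
have ss : size s' = q by case: ss'.
rewrite /dl /cobound size_pp ss' big_nat_recl // rem_at0_pp iK ?all_pp //.
rewrite -addrA; congr (_ + _); rewrite big_nat_recr //; congr (_ + _).
  rewrite big_mkord; apply: eq_bigr => i _; rewrite rem_at_pp //= ss ltnS //.
have := rem_at_pp_last a s'; rewrite ss => ->.
by rewrite /inh.
Qed.

Lemma hom_inv f : Ainv [set: gT] (hom f).
Proof. by move=> g x _ _; rewrite /hom diffs_map. Qed.

Lemma inh_hom f s : inh (hom f) s = f s.
Proof. by rewrite /inh /hom diffs_pp. Qed.

Lemma dl_inv (A : {set gT}) K : Ainv A K -> Ainv A (dl K).
Proof.
move=> iK g x Ag Ax; rewrite -dl_map; apply: dl_eq => j _.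
by rewrite /= iK // all_rem_at.
Qed.

Lemma dl_hom f q x : size x = q.+2 -> dl (hom f) x = cobound q f (diffs x).
Proof.
case: x => [|a x] // [sx].
rewrite -(dl_inv (@hom_inv f) (g := (a^-1)%g) (x := a :: x)) ?inE //; last by apply/allP => z _; rewrite inE.
rewrite -pp_diffs (chain (A := [set: gT]) (q := q)).
- by apply: cobound_ext => w; rewrite inh_hom.
- by move=> g y _ _; rewrite /hom diffs_map.
split; first by rewrite size_diffs /= sx.
by apply/allP => z _; rewrite inE.
Qed.

End Grp.


Section Cob.
Variables (gT : finGroupType) (M : zmodType).
Implicit Types (f g F K : seq gT -> M) (s u v w x y : seq gT).

Lemma coboundD n f1 f2 s :
  cobound n (fun w => f1 w + f2 w) s = cobound n f1 s + cobound n f2 s.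
Proof.
rewrite /cobound alt_signD.
under eq_bigr do rewrite alt_signD.
rewrite big_split /=.
set a1 := f1 _; set a2 := f2 _; set b1 := \sum_(i < n) _; set b2 := \sum_(i < n) _.
set c1 := alt_sign _ (f1 _); set c2 := alt_sign _ (f2 _).
by rewrite (addrACA a1 a2 b1 b2) (addrACA (a1 + b1)).
Qed.

Lemma coboundN n f s : cobound n (fun w => - f w) s = - cobound n f s.
Proof.
rewrite /cobound alt_signN !opprD; congr (_ + _ + _); rewrite -sumrN.
by apply: eq_bigr => i _; rewrite alt_signN.
Qed.

Lemma coboundB n f1 f2 s :
  cobound n (fun w => f1 w - f2 w) s = cobound n f1 s - cobound n f2 s.
Proof. by rewrite coboundD coboundN. Qed.

Lemma coboundMz n f k s : cobound n (fun w => f w *~ k) s = cobound n f s *~ k.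
Proof.
rewrite /cobound alt_signMz !mulrzDl mulrz_suml; congr (_ + _ + _).
by apply: eq_bigr => i _; rewrite alt_signMz.
Qed.

Lemma coboundMn n f k s : cobound n (fun w => f w *+ k) s = cobound n f s *+ k.
Proof. by rewrite pmulrn -(coboundMz n f k s); apply: cobound_ext => w; rewrite pmulrn. Qed.

Lemma cobound0 n s : cobound n (fun _ => (0 : M)) s = 0.
Proof. by rewrite /cobound big1 ?alt_sign0 ?addr0 // => i _; rewrite alt_sign0. Qed.

Lemma cobound_const n (c : M) s : cobound n (fun _ => c) s = if odd n then c else 0.
Proof.
rewrite /cobound.
have := sum_alt_const n.+2 c; rewrite big_ord_recr big_ord_recl /= negbK => <-.
by [].
Qed.

Lemma cobound_sum I (r : seq I) (P : pred I) (E : I -> seq gT -> M) n s :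
  cobound n (fun w => \sum_(i <- r | P i) E i w) s = \sum_(i <- r | P i) cobound n (E i) s.
Proof.
elim: r => [|a r IH].
  transitivity (cobound n (fun _ => (0 : M)) s); last by rewrite cobound0 big_nil.
  by apply: cobound_ext => w; rewrite big_nil.
rewrite big_cons -IH; case Pa: (P a).
  by rewrite -coboundD; apply: cobound_ext => w; rewrite big_cons Pa.
by apply: cobound_ext => w; rewrite big_cons Pa.
Qed.

Lemma merge_at_nseq i n : (i < n)%N -> merge_at i (nseq n.+1 (1%g : gT)) = nseq n 1%g.
Proof.
elim: n i => [|n IH] [|i] //=.
  by rewrite merge_at0 mulg1.
by rewrite ltnS => lt; rewrite merge_atS IH.
Qed.

Lemma cobound_nseq n f : cobound n f (nseq n.+1 1%g) = if odd n then f (nseq n 1%g) else 0.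
Proof.
rewrite -(cobound_const n _ (nseq n.+1 1%g)) /cobound /=; congr (_ + _ + _).
  by apply: eq_bigr => i _; rewrite merge_at_nseq.
congr (alt_sign _ (f _)); elim: n {f} => //= n IH; by rewrite IH.
Qed.

Variable (A : {set gT}).

Lemma cob_ext q f1 f2 : (forall s, tuple_in A q s -> f1 s = f2 s) ->
  is_coboundary A q f1 -> is_coboundary A q f2.
Proof. by move=> e [g hg]; exists g => s ts; rewrite -e // hg. Qed.

Lemma cob0 q : is_coboundary A q (fun _ => (0 : M)).
Proof. by exists (fun _ => (0 : M)) => s _; rewrite cobound0. Qed.

Lemma cobD q f1 f2 : is_coboundary A q f1 -> is_coboundary A q f2 ->
  is_coboundary A q (fun s => f1 s + f2 s).
Proof.
move=> [g1 h1] [g2 h2]; exists (fun w => g1 w + g2 w) => s ts.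
by rewrite coboundD h1 ?h2.
Qed.

Lemma cobN q f : is_coboundary A q f -> is_coboundary A q (fun s => - f s).
Proof. by move=> [g h]; exists (fun w => - g w) => s ts; rewrite coboundN h. Qed.

Lemma cobB q f1 f2 : is_coboundary A q f1 -> is_coboundary A q f2 ->
  is_coboundary A q (fun s => f1 s - f2 s).
Proof. by move=> h1 h2; apply: cobD => //; apply: cobN. Qed.

Lemma cobMz q f k : is_coboundary A q f -> is_coboundary A q (fun s => f s *~ k).
Proof. by move=> [g h]; exists (fun w => g w *~ k) => s ts; rewrite coboundMz h. Qed.

Lemma cobMn q f k : is_coboundary A q f -> is_coboundary A q (fun s => f s *+ k).
Proof. by move=> [g h]; exists (fun w => g w *+ k) => s ts; rewrite coboundMn h. Qed.

Lemma cob_sum q I (r : seq I) (P : pred I) (E : I -> seq gT -> M) :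
  (forall i, P i -> is_coboundary A q (E i)) ->
  is_coboundary A q (fun s => \sum_(i <- r | P i) E i s).
Proof.
move=> h; elim: r => [|a r IH].
  by apply: cob_ext (cob0 q) => s _; rewrite big_nil.
case Pa: (P a).
  by apply: cob_ext (cobD (h a Pa) IH) => s _; rewrite big_cons Pa.
by apply: cob_ext IH => s _; rewrite big_cons Pa.
Qed.

Lemma cob_cobound q g : is_coboundary A q.+1 (cobound q g).
Proof. by exists g. Qed.

Lemma cob_coprime q f k1 k2 : coprime k1 k2 ->
  is_coboundary A q (fun s => f s *+ k1) -> is_coboundary A q (fun s => f s *+ k2) ->
  is_coboundary A q f.
Proof.
move=> cop h1 h2; have [u [v e]] := Bezoutz k1 k2.
have g1 : gcdz k1 k2 = 1 by rewrite /gcdz /= (eqP cop).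
apply: cob_ext (cobD (cobMz u h1) (cobMz v h2)) => s _.
by rewrite !pmulrn !mulrzA_C -mulrzDr e g1 mulr1z.
Qed.

Lemma cocD q f1 f2 : is_cocycle A q f1 -> is_cocycle A q f2 ->
  is_cocycle A q (fun s => f1 s + f2 s).
Proof. by move=> h1 h2 s ts; rewrite coboundD h1 ?h2 ?addr0. Qed.

Lemma cocMz q f k : is_cocycle A q f -> is_cocycle A q (fun s => f s *~ k).
Proof. by move=> h s ts; rewrite coboundMz h ?mul0rz. Qed.

Lemma cocMn q f k : is_cocycle A q f -> is_cocycle A q (fun s => f s *+ k).
Proof. by move=> h s ts; rewrite coboundMn h ?mul0rn. Qed.

End Cob.

Lemma cob_sub (gT : finGroupType) (M : zmodType) (A B : {set gT}) q (f : seq gT -> M) :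
  A \subset B -> is_coboundary B q f -> is_coboundary A q f.
Proof.
move=> sAB [g h]; exists g => s [ss As]; apply: h; split => //.
by apply/allP => z zs; apply: (subsetP sAB); move/allP: As => /(_ z zs).
Qed.

Lemma coc_sub (gT : finGroupType) (M : zmodType) (A B : {set gT}) q (f : seq gT -> M) :
  A \subset B -> is_cocycle B q f -> is_cocycle A q f.
Proof.
move=> sAB h s [ss As]; apply: h; split => //.
by apply/allP => z zs; apply: (subsetP sAB); move/allP: As => /(_ z zs).
Qed.

Lemma cob_const (gT : finGroupType) (M : zmodType) (A B : {group gT}) q (f : seq gT -> M) :
  (0 < q)%N -> is_cocycle B q f -> is_coboundary A q (fun _ => f (nseq q 1%g)).
Proof.
move=> q0 hf; case oq: (odd q).
  have : cobound q f (nseq q.+1 1%g) = 0.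
    apply: hf; split; first by rewrite size_nseq.
    by apply/allP => z /nseqP [-> _]; rewrite group1.
  rewrite cobound_nseq oq => ->; exact: cob0.
exists (fun _ => f (nseq q 1%g)) => s _; rewrite cobound_const.
by case: q q0 oq {hf} => //= q _ /negbFE ->.
Qed.


Section Cor.
Variables (gT : finGroupType) (M : zmodType).
Implicit Types (f g F K : seq gT -> M) (s u v w x : seq gT).

Definition rr (rho : gT -> gT) (y : gT) : gT := (y * (rho y)^-1)%g.

Definition transv (A H T : {set gT}) (rho : gT -> gT) : Prop :=
  H \subset A /\ [/\ T \subset A, {in A, forall y, rho y \in T},
      {in A, forall y, rr rho y \in H},
      {in H & A, forall h y, rho (h * y)%g = rho y} & {in T, forall t, rho t = t}].

Definition sumT (T : {set gT}) rho (W : seq gT -> seq gT -> M) x : M :=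
  \sum_(t in T) W (map (fun z => rr rho (t * z)%g) x) (map (mulg t) x).

Definition corK T rho F x : M := sumT T rho (fun u _ => F u) x.

Definition cor T rho f : seq gT -> M := inh (corK T rho (hom f)).

Lemma reindex_in (T : {set gT}) (sg : gT -> gT) (Phi : gT -> M) :
  {in T, forall t, sg t \in T} -> {in T &, injective sg} ->
  \sum_(t in T) Phi (sg t) = \sum_(t in T) Phi t.
Proof.
move=> sT inj; rewrite -big_imset //.
have -> : sg @: T = T; last by [].
apply/eqP; rewrite eqEcard card_in_imset // leqnn andbT.
by apply/subsetP => _ /imsetP[t tT ->]; exact: sT.
Qed.

Variables (A H : {group gT}) (T : {set gT}) (rho : gT -> gT).
Hypothesis tr : transv A H T rho.

Lemma tr_rrM h z : h \in H -> z \in A -> rr rho (h * z)%g = (h * rr rho z)%g.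
Proof.
case: tr => _ [_ _ _ rM _] hH zA.
by rewrite /rr rM // mulgA.
Qed.

Lemma sumT_inv W : (forall h u v, h \in H -> W (map (mulg h) u) (map (mulg h) v) = W u v) ->
  Ainv A (sumT T rho W).
Proof.
move=> iW g x Ag Ax; case: (tr) => sHA [sTA rhoT rrH rM rid].
rewrite /sumT -[RHS](reindex_in (sg := fun t => rho (t * g)%g)); last first.
- move=> t1 t2 t1T t2T /= e.
  have t1A : t1 \in A by apply: (subsetP sTA).
  have t2A : t2 \in A by apply: (subsetP sTA).
  have h1 := rrH (t1 * g)%g (groupM t1A Ag).
  have h2 := rrH (t2 * g)%g (groupM t2A Ag).
  have ee : t1 = (rr rho (t1 * g) * (rr rho (t2 * g))^-1 * t2)%g.
    by rewrite /rr e invMg invgK !mulgA mulgKV invMg !mulgA mulgK mulgKV.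
  rewrite -(rid t1) // {1}ee rM; [exact: rid | by rewrite groupM ?groupV | exact: t2A].
- by move=> t tT; apply: rhoT; rewrite groupM // (subsetP sTA).
apply: eq_bigr => t tT.
have tA : t \in A by apply: (subsetP sTA).
set h := rr rho (t * g)%g.
have hH : h \in H by apply: rrH; rewrite groupM.
have et : (t * g = h * rho (t * g))%g by rewrite /h /rr mulgKV.
rewrite -[RHS](iW h) //; rewrite -!map_comp.
congr W; apply/eq_in_map => z zx /=.
  have zA : z \in A by move/allP: Ax => /(_ z zx).
  have rA : rho (t * g)%g \in A by apply: (subsetP sTA); apply: rhoT; rewrite groupM.
  rewrite mulgA {1}et -mulgA; apply: tr_rrM => //; exact: groupM.
by rewrite mulgA {1}et mulgA.
Qed.

Lemma corK_inv F : (forall h u, F (map (mulg h) u) = F u) -> Ainv A (corK T rho F).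
Proof.
move=> iF; rewrite /corK; apply: sumT_inv; move=> h0 u0 v0 _; exact: iF.
Qed.

Lemma all_rr t x : t \in T -> all (mem A) x -> all (mem H) (map (fun z => rr rho (t * z)%g) x).
Proof.
case: (tr) => _ [sTA _ rrH _ _] tT Ax; apply/allP => _ /mapP[z zx ->].
have zA : z \in A := allP Ax z zx.
by apply: rrH; apply: groupM => //; apply: (subsetP sTA).
Qed.

Lemma all_mulT t x : t \in T -> all (mem A) x -> all (mem A) (map (mulg t) x).
Proof.
case: (tr) => _ [sTA _ _ _ _] tT Ax; apply/allP => _ /mapP[z zx ->].
have zA : z \in A := allP Ax z zx.
by apply: groupM => //; apply: (subsetP sTA).
Qed.

Lemma dl_corK F x : dl (corK T rho F) x =
  \sum_(t in T) dl F (map (fun z => rr rho (t * z)%g) x).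
Proof.
rewrite /corK /sumT dl_sum; apply: eq_bigr => t _.
by rewrite -dl_map.
Qed.

Lemma cor_cocycle q f : is_cocycle H q f -> is_cocycle A q (cor T rho f).
Proof.
move=> hf s ts; rewrite /cor -(chain (A := A)) //; last by apply: corK_inv => h u; rewrite /hom diffs_map.
rewrite dl_corK big1 // => t tT.
case: ts => ss As.
rewrite (@dl_hom _ _ _ q); last by rewrite size_map size_pp ss.
apply: hf; split; first by rewrite size_diffs size_map size_pp ss.
by apply: all_diffs; apply: all_rr => //; apply: all_pp.
Qed.

Lemma cor_cob q f g : (forall s, tuple_in H q.+1 s -> f s = cobound q g s) ->
  forall s, tuple_in A q.+1 s -> cor T rho f s = cobound q (cor T rho g) s.
Proof.
move=> hf s ts; rewrite /cor -(chain (A := A)) //; last by apply: corK_inv => h u; rewrite /hom diffs_map.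
rewrite dl_corK /inh /corK /sumT; apply: eq_bigr => t tT.
case: ts => ss As.
rewrite (@dl_hom _ _ _ q); last by rewrite size_map size_pp ss.
rewrite /hom; apply: hf; split; first by rewrite size_diffs size_map size_pp ss.
by apply: all_diffs; apply: all_rr => //; apply: all_pp.
Qed.

Lemma cor_res q f : is_cocycle A q.+1 f ->
  forall s, tuple_in A q.+1 s ->
    f s *+ #|T| - cor T rho f s = cobound q (inh (sumT T rho (Pz (hom f)))) s.
Proof.
move=> hf s ts; have [ss As] := ts.
rewrite -(chain (A := A)) //; last first.
  apply: sumT_inv => h u v _; apply: Pz_map => w; by rewrite /hom diffs_map.
rewrite /sumT dl_sum /cor /inh /corK /sumT -(inh_hom f s) /inh -sumr_const -sumrB.
apply: eq_bigr => t tT.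
rewrite -dl2_map.
have -> : hom f (pp s) = hom f (map (mulg t) (pp s)) by rewrite /hom diffs_map.
rewrite -prism; last by rewrite !size_map.
rewrite (Pz_zero (P := mem A)) ?addr0 //.
- move=> w sw Aw; rewrite (@dl_hom _ _ _ q.+1); last by rewrite sw size_map size_pp ss.
  apply: hf; split; first by rewrite size_diffs sw size_map size_pp ss.
  by apply: all_diffs.
- apply: sub_all (all_rr tT (all_pp As)) => z; case: (tr) => sHA _.
  by move=> zH; apply: (subsetP sHA).
- by apply: all_mulT => //; apply: all_pp.
- by rewrite !size_map.
Qed.

Lemma cor_index q f : is_cocycle A q.+1 f -> is_coboundary H q.+1 f ->
  is_coboundary A q.+1 (fun s => f s *+ #|T|).
Proof.
move=> hf [g hg].
have c1 : is_coboundary A q.+1 (fun s => f s *+ #|T| - cor T rho f s).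
  by exists (inh (sumT T rho (Pz (hom f)))) => s ts; rewrite (cor_res hf).
have c2 : is_coboundary A q.+1 (cor T rho f).
  by exists (cor T rho g) => s ts; rewrite (cor_cob hg).
by apply: cob_ext (cobD c1 c2) => s _; rewrite subrK.
Qed.

End Cor.


Section Inst.
Variables (gT : finGroupType) (M : zmodType).
Implicit Types (f g F K : seq gT -> M) (s u v w x : seq gT).

Lemma transv_repr (A H : {group gT}) : H \subset A ->
  transv A H (repr @: rcosets H A) (fun y => repr (H :* y)%g).
Proof.
move=> sHA; split => //; split.
- apply/subsetP => _ /imsetP[C /imsetP[y yA ->] ->].
  have := mem_repr_rcoset H y; rewrite rcosetE mem_rcoset => hm.
  by rewrite -(mulgKV y (repr _)) groupM // (subsetP sHA).
- by move=> y yA; apply: imset_f; rewrite -rcosetE imset_f.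
- move=> y yA; rewrite /rr; have := mem_repr_rcoset H y.
  by rewrite mem_rcoset => hm; have := groupVr hm; rewrite invMg invgK.
- by move=> h y hH yA /=; rewrite rcosetM (rcoset_id hH).
- by move=> _ /imsetP[C /imsetP[y yA ->] ->]; rewrite rcosetE rcoset_repr.
Qed.

Lemma card_transv_repr (A H : {group gT}) : H \subset A ->
  #|repr @: rcosets H A| = #|A : H|%g.
Proof.
move=> sHA; rewrite card_in_imset // => _ _ /imsetP[y yA ->] /imsetP[z zA ->].
by rewrite !rcosetE => e; rewrite -rcoset_repr e rcoset_repr.
Qed.

Lemma index_kill (A H : {group gT}) q f : H \subset A ->
  is_cocycle A q.+1 f -> is_coboundary H q.+1 f ->
  is_coboundary A q.+1 (fun s => f s *+ #|A : H|%g).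
Proof.
move=> sHA hf hH; rewrite -card_transv_repr //.
exact: (cor_index (transv_repr sHA)).
Qed.

Lemma order_kill (A : {group gT}) q f : is_cocycle A q.+1 f ->
  is_coboundary A q.+1 (fun s => f s *+ #|A|%g).
Proof.
move=> hf; rewrite -indexg1.
suff h1 : is_coboundary [1 gT]%G q.+1 f by exact: index_kill (sub1G A) hf h1.
apply: cob_ext (@cob_const gT M [1 gT]%G A q.+1 f (ltn0Sn q) hf) => s [ss As].
congr f; apply: (@eq_from_nth _ 1%g); rewrite ?size_nseq // => i lt.
rewrite nth_nseq lt; apply/esym/set1P.
by move/allP: As; apply; apply: mem_nth; rewrite ss.
Qed.

End Inst.


Section Conj.
Variables (gT : finGroupType) (M : zmodType).
Implicit Types (f F K : seq gT -> M) (s u v w x : seq gT).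

Lemma diffs_mapr (g : gT) x :
  diffs (map (fun z => z * g)%g x) = map (fun z => z ^ g)%g (diffs x).
Proof.
case: x => //= a x; elim: x a => //= b x IH a.
by rewrite IH invMg /conjg !mulgA.
Qed.

Lemma tuple_setT q s : size s = q -> tuple_in [set: gT] q s.
Proof. by move=> ss; split => //; apply/allP => z _; rewrite inE. Qed.

Lemma conj_cob (A : {group gT}) (B : {set gT}) q f (g : gT) :
  is_cocycle A q.+1 f -> g \in A -> B \subset A ->
  is_coboundary B q.+1 (fun s => conj_cochain g f s - f s).
Proof.
move=> hf gA sBA.
exists (inh (fun y => Pz (hom f) (map id y) (map (fun z => z * g)%g y))) => s [ss Bs].
have As : all (mem A) s by apply/allP => z zs; apply: (subsetP sBA); exact: (allP Bs).
rewrite -(chain (A := [set: gT])); last by apply: tuple_setT.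
- rewrite -dl2_map map_id.
  have -> : conj_cochain g f s = hom f (map (fun z => z * g)%g (pp s)).
    by rewrite /hom diffs_mapr diffs_pp.
  rewrite -(inh_hom f s) /inh -prism; last by rewrite size_map.
  rewrite (Pz_zero (P := mem A)) ?addr0 //.
  + move=> w sw Aw; rewrite (@dl_hom _ _ _ q.+1); last by rewrite sw size_pp ss.
    apply: hf; split; first by rewrite size_diffs sw size_pp ss.
    by apply: all_diffs.
  + exact: all_pp.
  + apply/allP => _ /mapP[z zs ->]; apply: groupM => //.
    exact: (allP (all_pp As)).
  + by rewrite size_map.
- move=> h y _ _ /=.
  have -> : map (fun z => z * g)%g (map (mulg h) y) = map (mulg h) (map (fun z => z * g)%g y).
    by rewrite -!map_comp; apply: eq_map => z /=; rewrite mulgA.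
  rewrite map_id -{1}(map_id (map (mulg h) y)) -map_comp.
  have -> : map (id \o mulg h) y = map (mulg h) (map id y) by rewrite map_id.
  by apply: Pz_map => w; rewrite /hom diffs_map.
Qed.

End Conj.


Section Bic.
Variable gT : finGroupType.
Local Open Scope group_scope.

Lemma bicyclicP (A : {group gT}) : bicyclic A <-> abelian A /\ ('r(A) <= 2)%N.
Proof.
split.
- case=> [cA | [B [C [cB cC dA]]]].
    split; first exact: cyclic_abelian.
    case/cyclicP: cA => x ->; rewrite rank_cycle; by case: (x != 1).
  have [_ eBC cBC _] := dprodP dA.
  case/cyclicP: cB => x eB; case/cyclicP: cC => y eC.
  have cA : abelian A by rewrite -eBC abelianM cBC andbT eB eC !cycle_abelian.
  split => //; rewrite -grank_abelian //.
  have -> : A = <<[set x; y]>>%G.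
    apply/val_inj/eqP; rewrite /= eqEsubset gen_subG; apply/andP; split.
      rewrite -eBC eB eC mul_subG // cycle_subG mem_gen // !inE eqxx ?orbT //.
    apply/subsetP => z; rewrite !inE => /orP[] /eqP ->; rewrite -eBC.
      by rewrite -(mulg1 x) mem_mulg ?group1 // eB cycle_id.
    by rewrite -(mul1g y) mem_mulg ?group1 // eC cycle_id.
  by rewrite (leq_trans (grank_min _)) // cards2; case: (x != y).
- case=> cA rA; have [b defA ob] := abelian_structure cA.
  have sb : (size b <= 2)%N by rewrite -(size_map order) ob size_abelian_type.
  case: b defA ob sb => [|x [|y [|z b]]] //= defA _ _.
  + by left; rewrite -defA big_nil cyclic1.
  + by left; rewrite -defA big_seq1 cycle_cyclic.
  + right; exists <[x]>%G, <[y]>%G; split; rewrite ?cycle_cyclic //.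
    by rewrite -defA big_cons big_seq1.
Qed.

Lemma bicyclicS (A B : {group gT}) : B \subset A -> bicyclic A -> bicyclic B.
Proof.
move=> sBA /bicyclicP[cA rA]; apply/bicyclicP; split; first exact: abelianS cA.
exact: leq_trans (rankS sBA) rA.
Qed.

Lemma bicyclic_morphim (D A : {group gT}) (f : {morphism D >-> gT}) :
  A \subset D -> bicyclic A -> bicyclic (f @* A)%G.
Proof.
move=> sAD /bicyclicP[cA rA]; apply/bicyclicP; split; first exact: morphim_abelian.
rewrite -grank_abelian ?morphim_abelian //.
by rewrite (leq_trans (morphim_grank _ sAD)) // grank_abelian.
Qed.

End Bic.


Section Final.
Variables (gT : finGroupType) (M : zmodType).
Implicit Types (f F K : seq gT -> M) (s u v w x : seq gT).

Lemma merge_at_map (pi : gT -> gT) (D : {set gT}) i s :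
  {in D &, {morph pi : x y / x * y}%g} -> all (mem D) s -> (i.+1 < size s)%N ->
  merge_at i (map pi s) = map pi (merge_at i s).
Proof.
move=> pM Ds lt; rewrite /merge_at map_cat map_take /= map_drop.
congr (_ ++ (_ :: _)).
have lt' : (i < size s)%N by apply: ltnW.
have ht : forall j, (j < size s)%N -> nth 1%g s j \in D.
  by move=> j lj; apply: (allP Ds); exact: mem_nth.
by rewrite !(nth_map 1%g) // pM //; apply: ht.
Qed.

Lemma cobound_map (pi : gT -> gT) (D : {set gT}) n f s :
  {in D &, {morph pi : x y / x * y}%g} -> all (mem D) s -> size s = n.+1 ->
  cobound n (fun w => f (map pi w)) s = cobound n f (map pi s).
Proof.
move=> pM Ds ss; rewrite /cobound behead_map map_take; congr (_ + _ + _).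
apply: eq_bigr => i _; rewrite (merge_at_map pM) // ss ltnS; exact: ltn_ord.
Qed.

Lemma cor_Mn T rho f k s : cor T rho (fun w => f w *+ k) s = cor T rho f s *+ k.
Proof. by rewrite /cor /inh /corK /sumT /hom -sumrMnl. Qed.

Lemma diffs_conj (g : gT) x :
  diffs (map (fun z => z ^ g)%g x) = map (fun z => z ^ g)%g (diffs x).
Proof.
case: x => //= a x; elim: x a => //= b x IH a.
by rewrite IH conjMg conjVg.
Qed.

Lemma bez_id (x : M) (u v : int) (n m : nat) :
  u * n%:Z + v * m%:Z = 1 -> x *~ v *+ m - x = (x *+ n) *~ (- u).
Proof.
move=> e.
have -> : x *~ v *+ m = x *~ (v * m%:Z) by rewrite pmulrn mulrzA_C mulrC.
have -> : (x *+ n) *~ (- u) = x *~ (- (u * n%:Z)) by rewrite pmulrn mulrzA_C mulNr.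
rewrite -{2}(mulr1z x) -e -mulrzBr; congr (_ *~ _).
by rewrite opprD addrCA subrr addr0.
Qed.

Lemma map_const_nseq (c : gT) x : map (fun _ => c) x = nseq (size x) c.
Proof. by elim: x => //= a x ->. Qed.

Lemma diffs_nseq k : diffs (nseq k.+1 (1%g : gT)) = nseq k 1%g.
Proof. by elim: k => // k; rewrite /diffs /= => ->; rewrite invg1 mulg1. Qed.

End Final.

Theorem theorem2p6 (gT : finGroupType) (M : zmodType) (G N G0 : {group gT})
  (nNG : (N <| G)%g) (sdG : (N ><| G0)%g = G) (cop : coprime #|N| #|G0|)
  (q : nat) (hq : (0 < q)%N) :
  (* the map is well defined: res maps B^q(G) into B^q(N)^{G0} x B^q(G0) *)
  (forall a : cochain gT M, is_cocycle G q a -> in_B G q a ->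
     [/\ in_B N q a, fixed_by N G0 q a & in_B G0 q a]) /\
  (* injectivity *)
  (forall a : cochain gT M, is_cocycle G q a -> in_B G q a ->
     is_coboundary N q a -> is_coboundary G0 q a -> is_coboundary G q a) /\
  (* surjectivity *)
  (forall b c : cochain gT M,
     is_cocycle N q b -> in_B N q b -> fixed_by N G0 q b ->
     is_cocycle G0 q c -> in_B G0 q c ->
     exists a : cochain gT M,
       [/\ is_cocycle G q a, in_B G q a,
           is_coboundary N q (fun s => a s - b s) &
           is_coboundary G0 q (fun s => a s - c s)]).
Proof.
have [nsNG sG0G eNG0 nNG0 tiNG0] := sdprod_context sdG.
have sNG : N \subset G := normal_sub nsNG.
have idxN : #|G : N|%g = #|G0| := esym (index_sdprod sdG).
have idxG0 : #|G : G0|%g = #|N|.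
  apply/eqP; rewrite -(eqn_pmul2l (cardG_gt0 G0)) Lagrange //.
  by rewrite -(sdprod_card sdG) mulnC.
case: q hq => // q _.
split; [|split].
- move=> a ha hB; split.
  + by move=> A sAN bA; apply: hB => //; exact: subset_trans sAN sNG.
  + move=> g gG0; apply: (conj_cob (A := G)) ha _ sNG; exact: (subsetP sG0G).
  + by move=> A sAN bA; apply: hB => //; exact: subset_trans sAN sG0G.
- move=> a ha _ hN h0.
  apply: (cob_coprime (k1 := #|G0|) (k2 := #|N|)); first by rewrite coprime_sym.
  + by rewrite -idxN; exact: index_kill sNG ha hN.
  + by rewrite -idxG0; exact: index_kill sG0G ha h0.
move=> b c hb hbB hbF hc hcB.
have [u [v e]] := Bezoutz #|N| #|G0|.
have e1 : u * #|N|%:Z + v * #|G0|%:Z = 1 by rewrite e /gcdz /= (eqP cop).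
pose rho := remgr N G0.
have trG : transv G N G0 rho.
  split => //; split => //.
  - by move=> y yG; apply: mem_remgr; rewrite eNG0.
  - by move=> y yG; apply: mem_divgr; rewrite eNG0.
  - by move=> h y hN yG; rewrite /rho remgrMl.
  - by move=> t tG0; rewrite /rho remgr_id.
have pM : {in G &, {morph rho : x y / x * y}%g} := remgrM (sdprod_compl sdG) nsNG.
pose pi : {morphism G >-> gT} := @Morphism gT gT G rho pM.
pose b' := fun s : seq gT => b s *~ v.
pose c' := fun s : seq gT => c s *+ #|N| *~ u.
have hb' : is_cocycle N q.+1 b' := cocMz _ hb.
have hc' : is_cocycle G0 q.+1 c' := cocMz _ (cocMn _ hc).
have rhoG0 : forall y, y \in G -> rho y \in G0 by move=> y yG; apply: mem_remgr; rewrite eNG0.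
have F1 : is_cocycle G q.+1 (fun s => c' (map rho s)).
  move=> s [ss Gs]; rewrite (@cobound_map gT M rho G q.+1 c' s pM) //; apply: hc'; split; first by rewrite size_map.
  by apply/allP => _ /mapP[z zs ->]; apply: rhoG0; exact: (allP Gs).
have F2 : forall s, tuple_in N q.+1 s ->
    cor G0 rho b' s = \sum_(t in G0) conj_cochain (t^-1)%g b' s.
  move=> s [ss Ns]; rewrite /cor /inh /corK /sumT; apply: eq_bigr => t tG0.
  rewrite /hom /conj_cochain.
  have -> : map (fun z => rr rho (t * z)%g) (pp s) = map (fun z => z ^ t^-1)%g (pp s).
    apply/eq_in_map => z zs; have zN : z \in N := allP (all_pp Ns) z zs.
    have zJ : (z ^ t^-1 \in N)%g.
      by rewrite memJ_norm // (subsetP nNG0) // groupV.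
    have e2 : (t * z = (z ^ t^-1) * t)%g by rewrite /conjg invgK !mulgA mulgKV.
    by rewrite /rr /rho e2 remgrMid // mulgK.
  by rewrite diffs_conj diffs_pp.
have F3 : forall s, tuple_in G0 q.+1 s -> cor G0 rho b' s = b' (nseq q.+1 1%g) *+ #|G0|.
  move=> s [ss G0s]; rewrite /cor /inh /corK /sumT -sumr_const; apply: eq_bigr => t tG0.
  have -> : map (fun z => rr rho (t * z)%g) (pp s) = map (fun _ => 1%g) (pp s).
    apply/eq_in_map => z zs; have zG0 : z \in G0 := allP (all_pp G0s) z zs.
    by rewrite /rr /rho remgr_id ?groupM // mulgV.
  by rewrite map_const_nseq size_pp ss /hom diffs_nseq.
have F4 : is_coboundary N q.+1 (fun s => cor G0 rho b' s - b' s *+ #|G0|).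
  have : is_coboundary N q.+1 (fun s => \sum_(t in G0) (conj_cochain (t^-1)%g b' s - b' s)).
    apply: cob_sum => t tG0; have hF := hbF _ (groupVr tG0).
    by apply: cob_ext (cobMz v hF) => s _; rewrite /conj_cochain /b' mulrzBl.
  apply: cob_ext => s ts; rewrite sumrB sumr_const F2 //.
have Fz1 : is_coboundary N q.+1 (fun s => b' s *+ #|G0| - b s).
  apply: cob_ext (cobMz (- u) (order_kill hb)) => s _.
  by rewrite /b' (bez_id _ e1).
exists (fun s => cor G0 rho b' s + c' (map rho s)); split.
- exact: cocD (cor_cocycle trG hb') F1.
- move=> A sAG bA.
  have sAN : A \subset 'N(N)%g := subset_trans sAG (normal_norm nsNG).
  apply: cobD.
  + have cop2 : coprime #|N| #|A : A :&: N|%g.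
      rewrite indexgI -card_quotient //; apply: coprime_dvdr _ cop.
      rewrite -idxN -card_quotient ?normal_norm //; exact: cardSg (quotientS N sAG).
    apply: (cob_coprime cop2).
    * have [g hg] := order_kill hb'.
      apply: cob_sub sAG _; exists (cor G0 rho g) => s ts.
      by rewrite -cor_Mn (cor_cob trG hg).
    * have hz : is_cocycle A q.+1 (cor G0 rho b') := coc_sub sAG (cor_cocycle trG hb').
      apply: index_kill (subsetIl A N) hz _.
      have hbA : is_coboundary (A :&: N)%G q.+1 b :=
        hbB (A :&: N)%G (subsetIr A N) (bicyclicS (subsetIl A N) bA).
      apply: cob_ext (cobD (cob_sub (subsetIr A N) F4) (cobMn #|G0| (cobMz v hbA))) => s _.
      by rewrite subrK.
  + have sPA : (pi @* A \subset G0)%g.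
      apply/subsetP => _ /morphimP[x xG xA ->]; exact: rhoG0.
    have hcA := hcB (pi @* A)%G sPA (bicyclic_morphim pi sAG bA).
    have [g hg] := cobMz u (cobMn #|N| hcA).
    exists (fun w => g (map rho w)) => s [ss As].
    have Gs : all (mem G) s by apply/allP => z zs; apply: (subsetP sAG); exact: (allP As).
    rewrite (@cobound_map gT M rho G q g s pM Gs) //; apply: hg; split; first by rewrite size_map.
    apply/allP => _ /mapP[z zs ->]; apply: (@mem_morphim gT gT G pi).
      exact: (allP Gs).
    exact: (allP As).
- have Fz2 : is_coboundary N q.+1 (fun s => c' (map rho s)).
    apply: cob_ext (@cob_const gT M N G0 q.+1 c' (ltn0Sn q) hc') => s [ss Ns].
    congr c'; rewrite -ss -map_const_nseq; apply/eq_in_map => z zs.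
    by rewrite /rho remgr1 //; exact: (allP Ns).
  apply: cob_ext (cobD (cobD F4 Fz1) Fz2) => s _.
  by rewrite addrA subrK addrAC.
- have Fz3 : is_coboundary G0 q.+1 (fun s => cor G0 rho b' s).
    apply: cob_ext (cobMn #|G0| (@cob_const gT M G0 N q.+1 b' (ltn0Sn q) hb')) => s ts.
    by rewrite F3.
  have Fz4 : is_coboundary G0 q.+1 (fun s => c' s - c s).
    apply: cob_ext (cobMz (- v) (order_kill hc)) => s _.
    have e3 : v * #|G0|%:Z + u * #|N|%:Z = 1 by rewrite addrC.
    by rewrite /c' -(bez_id _ e3) !pmulrn -!mulrzA mulrC.
  apply: cob_ext (cobD Fz3 Fz4) => s [ss G0s].
  have -> : map rho s = s.
    by rewrite -[RHS]map_id; apply/eq_in_map => z zs; rewrite /rho remgr_id //; exact: (allP G0s).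
  by rewrite addrA.
Qed.
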